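(* Let $\omega_0>0$, $\lambda\in\mathbb R$, $\omega\ge0$ measurable, $g\in\mathfrak h$, and let $G=G^*$ be a $2\times2$ matrix with zero diagonal entries in the $\sigma_z$-eigenbasis. Let $\mu$ be a Borel probability measure on $\mathfrak h$ that is even, i.e. $\mu(-A)=\mu(A)$ for all Borel $A\subset\mathfrak h$. For $f\in\mathfrak h$ let $U_t(f)$ solve $i\partial_tU_t(f)=[\tfrac12\omega_0\sigma_z+\sqrt2\lambda\,\mathrm{Re}\langle e^{-it\omega}f,g\rangle\,G]U_t(f)$, $U_0(f)=1$, and for a $2\times2$ matrix $X$ set $\Phi_t(X)=\int_{\mathfrak h}d\mu(f)\,U_t(f)XU_t(f)^*$. Then for all $t$: if $X$ is diagonal, $\Phi_t(X)$ is diagonal; if $X$ has zero diagonal entries, so does $\Phi_t(X)$. Consequently the diagonal and off-diagonal parts of the spin density matrix $\gamma(t)=\Phi_t(\gamma_0)$ evolve independently.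
   Context: $\mathfrak h=L^2(\mathbb R^3,d^3k)$ with inner product $\langle f,g\rangle=\int\overline fg$; $e^{-it\omega}$ acts by multiplication; ''diagonal'' refers to the eigenbasis $\sigma_z|1\rangle=|1\rangle$, $\sigma_z|2\rangle=-|2\rangle$. *)

(* Defs.v *)
From HB Require Import structures.
From mathcomp Require Import all_boot all_order all_algebra.
From mathcomp Require Import all_classical all_reals all_analysis.
From mathcomp Require Import complex.
Set Implicit Arguments. Unset Strict Implicit. Unset Printing Implicit Defensive.
Import Order.TTheory GRing.Theory Num.Theory.
Import numFieldNormedType.Exports.
Local Open Scope classical_set_scope.
Local Open Scope ring_scope.
Local Open Scope complex_scope.

Section Defs.
Variable R : realType.
Local Notation C := R[i].

(** The real line with its Borel sigma-algebra (the domain of lebesgue_measure). *)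
Definition Rm : measurableType _ := g_sigma_algebraType (R.-ocitv.-measurable).
Definition k3 : measurableType _ := ((Rm * Rm) * Rm)%type.
Definition leb3 := ((@lebesgue_measure R \x @lebesgue_measure R) \x @lebesgue_measure R)%E.

Definition csq (z : C) : R := (complex.Re z) ^+ 2 + (complex.Im z) ^+ 2.

Definition cint d (T : measurableType d) (mu : {measure set T -> \bar R}) (D : set T)
  (F : T -> C) : C :=
  ((Rintegral mu D (fun x => complex.Re (F x))) +i* (Rintegral mu D (fun x => complex.Im (F x))))%C.

Definition L2 (f : k3 -> C) : Prop :=
  [/\ measurable_fun setT (fun k => complex.Re (f k)),
      measurable_fun setT (fun k => complex.Im (f k)) &
      (\int[leb3]_k (csq (f k))%:E < +oo)%E].

(** the one-particle space h = L^2(R^3, d^3k) (represented by functions; the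
    topology below is the L^2 (semi)norm topology) *)
Definition hspace := {f : k3 -> C | L2 f}.
Definition hfun (f : hspace) : k3 -> C := proj1_sig f.
Coercion hfun : hspace >-> Funclass.

Lemma L2_0 : L2 (fun _ => 0).
Proof.
split; first exact: measurable_cst.
  exact: measurable_cst.
under eq_integral do rewrite /csq /= expr2 mulr0 addr0.
by rewrite integral0 ltry.
Qed.

HB.instance Definition _ := gen_eqMixin hspace.
HB.instance Definition _ := gen_choiceMixin hspace.
HB.instance Definition _ := isPointed.Build hspace (exist _ _ L2_0).

Lemma L2N (f : k3 -> C) : L2 f -> L2 (fun k => - f k).
Proof.
case=> mre mim fin; split.
- have -> : (fun k => complex.Re (- f k)) = (fun k => - complex.Re (f k)).
    by apply: funext => k; case: (f k).
  exact: measurableT_comp.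
- have -> : (fun k => complex.Im (- f k)) = (fun k => - complex.Im (f k)).
    by apply: funext => k; case: (f k).
  exact: measurableT_comp.
- have -> : (fun k => (csq (- f k))%:E) = (fun k => (csq (f k))%:E) :> (k3 -> \bar R).
    by apply: funext => k; case: (f k) => a b; rewrite /csq /= !sqrrN.
  exact: fin.
Qed.

Definition hneg (f : hspace) : hspace := exist _ _ (L2N (proj2_sig f)).

Definition inner (u v : k3 -> C) : C := cint leb3 setT (fun k => (u k)^* * v k).

Definition hopen (A : set hspace) : Prop :=
  forall f, A f -> exists2 e : R, 0 < e &
    forall h : hspace, (\int[leb3]_k (csq (f k - h k))%:E < e%:E)%E -> A h.

Definition hBorel : measurableType _ := g_sigma_algebraType hopen.

Definition expi (x : R) : C := (cos x +i* sin x)%C.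

(** sigma_z in the basis |1> = index 0, |2> = index 1 *)
Definition sigmaz : 'M[C]_2 := \matrix_(i, j) (if i == j then (if i == 0 then 1 else -1) else 0).

Definition adj (A : 'M[C]_2) : 'M[C]_2 := \matrix_(i, j) (A j i)^*.

Definition is_diag2 (X : 'M[C]_2) : Prop := X 0 1 = 0 /\ X 1 0 = 0.
Definition is_offdiag2 (X : 'M[C]_2) : Prop := X 0 0 = 0 /\ X 1 1 = 0.

Definition Ham (w0 lam : R) (w : k3 -> R) (g : hspace) (G : 'M[C]_2)
    (f : hspace) (t : R) : 'M[C]_2 :=
  (w0 / 2)%:C *: sigmaz
  + (Num.sqrt 2 * lam * complex.Re (inner (fun k => expi (- (t * w k)) * f k) g))%:C *: G.

Definition Phi (mu : probability hBorel R) (U : hspace -> R -> 'M[C]_2)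
    (t : R) (X : 'M[C]_2) : 'M[C]_2 :=
  \matrix_(i, j) cint mu setT (fun f : hBorel => (U f t *m X *m adj (U f t)) i j).

Definition solves_ODE (w0 lam : R) (w : k3 -> R) (g : hspace) (G : 'M[C]_2)
    (U : hspace -> R -> 'M[C]_2) : Prop :=
  forall f : hspace, U f 0 = 1%:M /\
    forall t : R, exists2 D : 'M[C]_2,
      (forall i j : 'I_2,
         is_derive t 1 (fun s => complex.Re (U f s i j)) (complex.Re (D i j)) /\
         is_derive t 1 (fun s => complex.Im (U f s i j)) (complex.Im (D i j)))
      & 'i *: D = Ham w0 lam w g G f t *m U f t.

End Defs.

(* Main.v *)
Require Import Defs.
From HB Require Import structures.
From mathcomp Require Import all_boot all_order all_algebra.
From mathcomp Require Import all_classical all_reals all_analysis.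
From mathcomp Require Import complex.
From mathcomp Require Import lra ring.
Import Order.TTheory GRing.Theory Num.Theory.
Local Open Scope classical_set_scope.
Local Open Scope ring_scope.

Section CV.
Context d (T : measurableType d) (R : realType) (mu : {measure set T -> \bar R}).
Variable phi : T -> T.
Hypothesis mphi : measurable_fun setT phi.
Hypothesis phiK : forall x, phi (phi x) = x.
Hypothesis muphi : forall A, measurable A -> mu (phi @^-1` A) = mu A.
Import HBNNSimple.

Lemma sintegral_comp (h : {nnsfun T >-> R}) :
  sintegral mu (h \o phi) = sintegral mu h.
Proof.
rewrite /sintegral; apply: eq_fsbigr => x _.
by rewrite comp_preimage muphi //.
Qed.

Lemma comp_set_sub (f g : T -> \bar R) : (forall x, f x = g (phi x)) ->
  [set sintegral mu h | h in [set h : {nnsfun T >-> R} | forall x, ((h x)%:E <= f x)%E]]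
  `<=` [set sintegral mu h | h in [set h : {nnsfun T >-> R} | forall x, ((h x)%:E <= g x)%E]].
Proof.
move=> fg.
move=> _ [h hle <-].
pose k := h \o phi.
have mk : measurable_fun setT k by apply: measurableT_comp.
have fk : finite_set (range k).
  apply: (sub_finite_set _ (@fimfunP _ _ h)).
  by move=> _ [x _ <-]; exists (phi x).
have k0 : forall x, (0 <= k x)%R by move=> x; apply: fun_ge0.
pose km := isMeasurableFun.Build _ _ _ _ k mk.
pose kf := FiniteImage.Build _ _ k fk.
pose kn := isNonNegFun.Build _ _ k k0.
pose G : {nnsfun T >-> R} := HB.pack k km kf kn.
exists G.
  by move=> x; have := hle (phi x); rewrite fg phiK.
exact: sintegral_comp.
Qed.

Lemma ge0_integral_comp (f : T -> \bar R) : (forall x, (0 <= f x)%E) ->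
  (\int[mu]_x f (phi x) = \int[mu]_x f x)%E.
Proof.
move=> f0.
rewrite !ge0_integralTE //; congr ereal_sup.
apply/seteqP; split; first exact: comp_set_sub.
by apply: comp_set_sub => x; rewrite phiK.
Qed.

Lemma integral_comp (f : T -> \bar R) :
  (\int[mu]_x f (phi x) = \int[mu]_x f x)%E.
Proof.
rewrite integralE [in RHS]integralE.
have Hp := ge0_integral_comp ((f^\+)%E) (fun x => funepos_ge0 f x).
have Hn := ge0_integral_comp ((f^\-)%E) (fun x => funeneg_ge0 f x).
rewrite -Hp -Hn.
by congr (_ - _)%E; apply: eq_integral => x _; rewrite !(funeposE, funenegE).
Qed.

Lemma Rintegral_comp (f : T -> R) :
  Rintegral mu setT (fun x => f (phi x)) = Rintegral mu setT f.
Proof. by rewrite /Rintegral (integral_comp (fun x => (f x)%:E)). Qed.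

End CV.

Lemma fine_swap (R : realType) (a b : \bar R) : (0 <= a)%E -> (0 <= b)%E ->
  fine (b - a)%E = - fine (a - b)%E.
Proof.
case: a => [r||] //; case: b => [s||] //= _ _; rewrite ?oppr0 //.
by rewrite opprB.
Qed.

Lemma hRintegralN d (T : measurableType d) (R : realType) (mu : {measure set T -> \bar R})
  (D : set T) (f : T -> R) :
  Rintegral mu D (fun x => - f x) = - Rintegral mu D f.
Proof.
rewrite /Rintegral.
have -> : (fun x => (- f x)%:E) = (\- (fun x => (f x)%:E))%E by apply: funext => x; rewrite EFinN.
rewrite integralE [in RHS]integralE funeposN funenegN.
by apply: fine_swap; apply: integral_ge0 => x _.
Qed.

Section H.
Variable R : realType.

Lemma hnegK (f : hspace R) : hneg (hneg f) = f.
Proof.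
case: f => f p; rewrite /hneg /=; apply: eq_exist.
by apply: funext => k /=; rewrite opprK.
Qed.

Lemma csqN (z : R[i]) : csq (- z) = csq z.
Proof. by case: z => a b; rewrite /csq /= !sqrrN. Qed.

Lemma hneg_measurable : measurable_fun setT (@hneg R : hBorel R -> hBorel R).
Proof.
apply: (@measurability _ _ (hBorel R) (hBorel R) setT (@hneg R) (@hopen R)); first by [].
move=> _ [B hB <-]; rewrite setTI; apply: sub_sigma_algebra => f /= Bf.
have [e e0 He] := hB _ Bf.
exists e => // h hh; apply: He => /=.
suff -> : (fun k => (csq ((hneg f) k - (hneg h) k))%:E) = (fun k => (csq (f k - h k))%:E) by [].
apply: funext => k /=; rewrite -csqN; congr (csq _)%:E.
by rewrite opprB addrC opprK.
Qed.


Lemma x_eq_Nx (x : R) : x = - x -> x = 0.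
Proof. move=> h; lra. Qed.

Lemma sym_cint (mu : probability (hBorel R) R) (F : hBorel R -> R[i]) :
  (forall A : set (hBorel R), measurable A -> mu (@hneg R @` A) = mu A) ->
  (forall f, F (hneg f) = - F f) -> cint mu setT F = 0.
Proof.
move=> muinv FN.
have mp : forall A : set (hBorel R), measurable A -> mu ((@hneg R : hBorel R -> hBorel R) @^-1` A) = mu A.
  move=> A mA; rewrite -[RHS]muinv //; congr (mu _).
  apply/seteqP; split => x /=.
    by move=> Ax; exists (hneg x) => //; rewrite hnegK.
  by move=> [y Ay <-]; rewrite hnegK.
have key : forall G : hBorel R -> R, (forall f, G (hneg f) = - G f) ->
    Rintegral mu setT G = 0.
  move=> G GN; apply: x_eq_Nx.
  rewrite -hRintegralN -(@Rintegral_comp _ (hBorel R) R mu (@hneg R) hneg_measurable hnegK mp).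
  by congr Rintegral; apply: funext => f; rewrite GN.
rewrite /cint (key (fun x => complex.Re (F x))) ?(key (fun x => complex.Im (F x))) //.
  by move=> f /=; rewrite FN; case: (F f).
by move=> f /=; rewrite FN; case: (F f).
Qed.
End H.

Set Implicit Arguments. Unset Strict Implicit. Unset Printing Implicit Defensive.

Section D.
Variable R : realType.
Local Notation C := R[i].

Definition cder (F : R -> C) (t : R) (d : C) :=
  is_derive t 1 (fun s => complex.Re (F s)) (complex.Re d) /\
  is_derive t 1 (fun s => complex.Im (F s)) (complex.Im d).

Lemma cder_ext F G t d d' : (forall s, F s = G s) -> d = d' -> cder F t d -> cder G t d'.
Proof. by move=> FG <-; have -> : F = G by apply: funext. Qed.

Lemma ReD (a b : C) : complex.Re (a + b) = complex.Re a + complex.Re b.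
Proof. by case: a; case: b. Qed.
Lemma ImD (a b : C) : complex.Im (a + b) = complex.Im a + complex.Im b.
Proof. by case: a; case: b. Qed.
Lemma ReM (a b : C) : complex.Re (a * b) = complex.Re a * complex.Re b - complex.Im a * complex.Im b.
Proof. by case: a => a1 a2; case: b => b1 b2. Qed.
Lemma ImM (a b : C) : complex.Im (a * b) = complex.Re a * complex.Im b + complex.Im a * complex.Re b.
Proof. by case: a => a1 a2; case: b => b1 b2. Qed.
Lemma Rec (a : C) : complex.Re (conjc a) = complex.Re a.
Proof. by case: a. Qed.
Lemma Imc (a : C) : complex.Im (conjc a) = - complex.Im a.
Proof. by case: a. Qed.

Lemma cder_cst (c : C) t : cder (fun _ => c) t 0.
Proof. by split; exact: is_derive_cst. Qed.

Lemma cder_add F G t a b : cder F t a -> cder G t b ->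
  cder (fun s => F s + G s) t (a + b).
Proof.
move=> [Fr Fi] [Gr Gi]; split.
  have -> : (fun s => complex.Re (F s + G s)) =
    ((fun s => complex.Re (F s)) + (fun s => complex.Re (G s)))%R.
    by apply: funext => s; rewrite ReD.
  by rewrite ReD; apply: is_deriveD.
have -> : (fun s => complex.Im (F s + G s)) =
  ((fun s => complex.Im (F s)) + (fun s => complex.Im (G s)))%R.
  by apply: funext => s; rewrite ImD.
by rewrite ImD; apply: is_deriveD.
Qed.

Lemma cder_mul F G t a b : cder F t a -> cder G t b ->
  cder (fun s => F s * G s) t (a * G t + F t * b).
Proof.
move=> [Fr Fi] [Gr Gi]; split.
  have -> : (fun s => complex.Re (F s * G s)) =
    ((fun s => complex.Re (F s)) * (fun s => complex.Re (G s)) -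
     (fun s => complex.Im (F s)) * (fun s => complex.Im (G s)))%R.
    by apply: funext => s; rewrite ReM.
  set e := complex.Re _.
  have -> : e = (complex.Re (F t) *: complex.Re b + complex.Re (G t) *: complex.Re a) -
     (complex.Im (F t) *: complex.Im b + complex.Im (G t) *: complex.Im a).
    rewrite /e ReD !ReM /GRing.scale /=; ring.
  by apply: is_deriveB; apply: is_deriveM.
have -> : (fun s => complex.Im (F s * G s)) =
  ((fun s => complex.Re (F s)) * (fun s => complex.Im (G s)) +
   (fun s => complex.Im (F s)) * (fun s => complex.Re (G s)))%R.
  by apply: funext => s; rewrite ImM.
set e := complex.Im _.
have -> : e = (complex.Re (F t) *: complex.Im b + complex.Im (G t) *: complex.Re a) +
   (complex.Im (F t) *: complex.Re b + complex.Re (G t) *: complex.Im a).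
  rewrite /e ImD !ImM /GRing.scale /=; ring.
by apply: is_deriveD; apply: is_deriveM.
Qed.

Lemma cder_conj F t a : cder F t a -> cder (fun s => conjc (F s)) t (conjc a).
Proof.
move=> [Fr Fi]; split.
  have -> : (fun s => complex.Re (conjc (F s))) = (fun s => complex.Re (F s)).
    by apply: funext => s; rewrite Rec.
  by rewrite Rec.
have -> : (fun s => complex.Im (conjc (F s))) = (- (fun s => complex.Im (F s)))%R.
  by apply: funext => s; rewrite Imc.
by rewrite Imc; apply: is_deriveN.
Qed.

Lemma cder_const0 F : (forall t, cder F t 0) -> forall t, F t = F 0%R.
Proof.
move=> H t.
have h1 : complex.Re (F t) = complex.Re (F 0%R).
  by apply: (is_derive_0_is_cst (f := fun s => complex.Re (F s))) => x; case: (H x).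
have h2 : complex.Im (F t) = complex.Im (F 0%R).
  by apply: (is_derive_0_is_cst (f := fun s => complex.Im (F s))) => x; case: (H x).
by move: h1 h2; case: (F t) => a b; case: (F 0%R) => c e /= -> ->.
Qed.

End D.

Section M.
Variable R : realType.
Local Notation C := R[i].

Lemma ord2 (i : 'I_2) : i = 0 \/ i = 1.
Proof. by case: i => [[|[|//]]] Hi; [left|right]; apply: val_inj. Qed.

Lemma mxmul2 (A B : 'M[C]_2) i j : (A *m B) i j = A i 0 * B 0 j + A i 1 * B 1 j.
Proof.
rewrite mxE !big_ord_recl big_ord0 addr0.
have -> : lift ord0 ord0 = 1 :> 'I_2 by apply: val_inj.
by have -> : ord0 = 0 :> 'I_2 by apply: val_inj.
Qed.

Lemma conjcE (x : C) : conjc x = x^*.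
Proof. by []. Qed.
Lemma hconjM (a b : C) : (a * b)^* = a^* * b^*.
Proof. rewrite -!conjcE; case: a => a1 a2; case: b => b1 b2 /=; congr Complex; ring. Qed.
Lemma hconjD (a b : C) : (a + b)^* = a^* + b^*.
Proof. rewrite -!conjcE; case: a => a1 a2; case: b => b1 b2 /=; congr Complex; ring. Qed.
Lemma hconjK (a : C) : a^*^* = a.
Proof. rewrite -!conjcE; case: a => a1 a2 /=; congr Complex; ring. Qed.
Lemma hconjN (a : C) : (- a)^* = - a^*.
Proof. rewrite -!conjcE; case: a => a1 a2 /=; congr Complex; ring. Qed.
Lemma hii : 'i * 'i = -1 :> C.
Proof. by rewrite -expr2 sqrCi. Qed.
Lemma hconji : ('i)^* = - 'i :> C.
Proof. exact: conjCi. Qed.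

Lemma hadjM (A B : 'M[C]_2) : adj (A *m B) = adj B *m adj A.
Proof.
apply/matrixP => i j; rewrite mxmul2 [LHS]mxE mxmul2 !mxE !conjcE hconjD !hconjM.
by rewrite [X in X + _]mulrC [X in _ + X]mulrC.
Qed.
Lemma hadjD (A B : 'M[C]_2) : adj (A + B) = adj A + adj B.
Proof. by apply/matrixP => i j; rewrite !mxE !conjcE hconjD. Qed.
Lemma hadjZ (a : C) (A : 'M[C]_2) : adj (a *: A) = a^* *: adj A.
Proof. by apply/matrixP => i j; rewrite !mxE !conjcE hconjM. Qed.
Lemma hadjK (A : 'M[C]_2) : adj (adj A) = A.
Proof. by apply/matrixP => i j; rewrite !mxE !conjcE hconjK. Qed.
Lemma hadj1 : adj 1%:M = 1%:M :> 'M[C]_2.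
Proof.
apply/matrixP => i j; rewrite !mxE !conjcE.
by rewrite conjC_nat eq_sym.
Qed.

Definition mder (F : R -> 'M[C]_2) t (D : 'M[C]_2) :=
  forall i j, cder (fun s => F s i j) t (D i j).

Lemma mder_ext F t D D' : D = D' -> mder F t D -> mder F t D'.
Proof. by move=> ->. Qed.

Lemma mder_mul F G t DF DG : mder F t DF -> mder G t DG ->
  mder (fun s => F s *m G s) t (DF *m G t + F t *m DG).
Proof.
move=> hF hG i j.
apply: (cder_ext (F := fun s => F s i 0 * G s 0 j + F s i 1 * G s 1 j)
  (d := (DF i 0 * G t 0 j + F t i 0 * DG 0 j) + (DF i 1 * G t 1 j + F t i 1 * DG 1 j))).
- by move=> s; rewrite mxmul2.
- by rewrite mxE !mxmul2; ring.
exact: (cder_add (cder_mul (hF i 0) (hG 0 j)) (cder_mul (hF i 1) (hG 1 j))).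
Qed.

Lemma mder_adj F t D : mder F t D -> mder (fun s => adj (F s)) t (adj D).
Proof.
move=> hF i j; rewrite mxE.
apply: cder_ext (cder_conj (hF j i)) => // s; by rewrite mxE.
Qed.

Lemma mder_cst (A : 'M[C]_2) t : mder (fun _ => A) t 0.
Proof. move=> i j; rewrite mxE; exact: cder_cst. Qed.

Lemma mder_const0 F : (forall t, mder F t 0) -> forall t, F t = F 0%R.
Proof.
move=> H t; apply/matrixP => i j.
apply: (cder_const0 (F := fun s => F s i j)) => s.
by have := H s i j; rewrite mxE.
Qed.

Lemma adj_const (H : R -> 'M[C]_2) V W : (forall t, adj (H t) = H t) ->
  V 0%R = 1%:M -> W 0%R = 1%:M ->
  (forall t, exists2 D, mder V t D & 'i *: D = H t *m V t) ->
  (forall t, exists2 D, mder W t D & 'i *: D = H t *m W t) ->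
  forall t, adj (W t) *m V t = 1%:M.
Proof.
move=> Hh V0 W0 hV hW.
have D0 : forall t, mder (fun s => adj (W s) *m V s) t 0.
  move=> t; have [DV dV eV] := hV t; have [DW dW eW] := hW t.
  apply: mder_ext (mder_mul (mder_adj dW) dV).
  have EV : DV = - 'i *: (H t *m V t) by rewrite -eV scalerA mulNr hii opprK scale1r.
  have EW : DW = - 'i *: (H t *m W t) by rewrite -eW scalerA mulNr hii opprK scale1r.
  rewrite EV EW hadjZ hadjM Hh hconjN hconji opprK.
  by rewrite -scalemxAl -scalemxAr mulmxA scaleNr subrr.
move=> t; rewrite (mder_const0 D0 t) /= V0 W0 hadj1 mul1mx //.
Qed.

End M.

Section S.
Variable R : realType.
Local Notation C := R[i].
Local Notation sz := (@sigmaz R).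

Lemma sz00 : sz 0 0 = 1. Proof. by rewrite mxE. Qed.
Lemma sz01 : sz 0 1 = 0. Proof. by rewrite mxE. Qed.
Lemma sz10 : sz 1 0 = 0. Proof. by rewrite mxE. Qed.
Lemma sz11 : sz 1 1 = -1. Proof. by rewrite mxE. Qed.

Lemma szE00 (A : 'M[C]_2) : (sz *m A *m sz) 0 0 = A 0 0.
Proof. by rewrite !mxmul2 ?sz00 ?sz01 ?sz10 ?sz11; ring. Qed.
Lemma szE11 (A : 'M[C]_2) : (sz *m A *m sz) 1 1 = A 1 1.
Proof. by rewrite !mxmul2 ?sz00 ?sz01 ?sz10 ?sz11; ring. Qed.
Lemma szE01 (A : 'M[C]_2) : (sz *m A *m sz) 0 1 = - A 0 1.
Proof. by rewrite !mxmul2 ?sz00 ?sz01 ?sz10 ?sz11; ring. Qed.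
Lemma szE10 (A : 'M[C]_2) : (sz *m A *m sz) 1 0 = - A 1 0.
Proof. by rewrite !mxmul2 ?sz00 ?sz01 ?sz10 ?sz11; ring. Qed.

Lemma mx2P (A B : 'M[C]_2) : A 0 0 = B 0 0 -> A 0 1 = B 0 1 -> A 1 0 = B 1 0 ->
  A 1 1 = B 1 1 -> A = B.
Proof.
move=> h1 h2 h3 h4; apply/matrixP => i j.
by case: (ord2 i) => ->; case: (ord2 j) => ->.
Qed.

Lemma sz2 : sz *m sz = 1%:M.
Proof.
apply: mx2P; rewrite !mxmul2 ?sz00 ?sz01 ?sz10 ?sz11 !mxE /=; ring.
Qed.

Lemma adj_sz : adj sz = sz.
Proof.
apply: mx2P; rewrite !mxE /=; congr Complex; ring.
Qed.



Lemma sz_off (A : 'M[C]_2) : is_offdiag2 A -> sz *m A *m sz = - A.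
Proof.
case=> h0 h1; apply: mx2P; rewrite ?szE00 ?szE01 ?szE10 ?szE11 !mxE ?h0 ?h1 //; by rewrite oppr0.
Qed.

Lemma sz_diag (A : 'M[C]_2) : is_diag2 A -> sz *m A *m sz = A.
Proof.
case=> h0 h1; apply: mx2P; rewrite ?szE00 ?szE01 ?szE10 ?szE11 ?h0 ?h1 //; by rewrite oppr0.
Qed.

Lemma rcN (x : R) : ((- x)%:C)%C = - ((x%:C)%C) :> C.
Proof. rewrite /=; congr Complex; ring. Qed.

Lemma inner_neg (e : k3 R -> C) (f g : hspace R) :
  complex.Re (inner (fun k => e k * (hneg f) k) g) =
  - complex.Re (inner (fun k => e k * f k) g).
Proof.
rewrite /inner /cint /= -hRintegralN; congr Rintegral; apply: funext => k.
rewrite /hneg /hfun /=.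
move: (e k) (proj1_sig f k) (proj1_sig g k) => a b c; case: a => a1 a2; case: b => b1 b2; case: c => c1 c2 /=.
ring.
Qed.

Lemma Ham_neg w0 lam w g (G : 'M[C]_2) f t : is_offdiag2 G ->
  Ham w0 lam w g G (hneg f) t = sz *m Ham w0 lam w g G f t *m sz.
Proof.
move=> Goff; rewrite /Ham inner_neg mulrN rcN scaleNr.
rewrite mulmxDr mulmxDl -!scalemxAr -!scalemxAl sz2 mul1mx sz_off // scalerN.
reflexivity.
Qed.

End S.

Lemma conj_form (R : realType) (A Y : 'M[R[i]]_2) :
  ((@sigmaz R) *m A *m (@sigmaz R)) *m Y *m adj ((@sigmaz R) *m A *m (@sigmaz R)) =
  (@sigmaz R) *m (A *m ((@sigmaz R) *m Y *m (@sigmaz R)) *m adj A) *m (@sigmaz R).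
Proof. by rewrite !hadjM adj_sz !mulmxA. Qed.


Local Open Scope complex_scope.

Theorem mainTheorem13 (R : realType) (w0 lam : R) (w : k3 R -> R) (g : hspace R)
  (G : 'M[R[i]]_2) (mu : probability (hBorel R) R)
  (U : hspace R -> R -> 'M[R[i]]_2) :
  0 < w0 ->
  measurable_fun setT w ->
  (forall k, 0 <= w k) ->
  adj G = G ->
  is_offdiag2 G ->
  (forall A : set (hBorel R), measurable A -> mu (@hneg R @` A) = mu A) ->
  solves_ODE w0 lam w g G U ->
  forall (t : R) (X : 'M[R[i]]_2),
    (is_diag2 X -> is_diag2 (Phi mu U t X)) /\
    (is_offdiag2 X -> is_offdiag2 (Phi mu U t X)).
Proof.
move=> _ _ _ Gh Goff muinv hsol t X.
have Usym : forall f s, U (hneg f) s = (@sigmaz R) *m U f s *m (@sigmaz R).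
  move=> f s.
  pose V := U (hneg f).
  pose W := fun s => (@sigmaz R) *m U f s *m (@sigmaz R).
  pose H := Ham w0 lam w g G (hneg f).
  have Hh : forall s, adj (H s) = H s.
    move=> r; rewrite /H /Ham hadjD !hadjZ Gh adj_sz.
    by rewrite -!conjcE /=; congr (_ *: _ + _ *: _); congr Complex; ring.
  have hV : forall r, exists2 D, mder V r D & 'i *: D = H r *m V r.
    by move=> r; have [D dD eD] := (hsol (hneg f)).2 r; exists D.
  have hW : forall r, exists2 D, mder W r D & 'i *: D = H r *m W r.
    move=> r; have [D dD eD] := (hsol f).2 r.
    exists ((@sigmaz R) *m D *m (@sigmaz R)).
      apply: mder_ext (mder_mul (mder_mul (mder_cst (@sigmaz R) r) dD) (mder_cst (@sigmaz R) r)).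
      by rewrite !mul0mx add0r mulmx0 addr0.
    rewrite scalemxAl scalemxAr eD /H Ham_neg // /W.
    by rewrite !mulmxA -[_ *m (@sigmaz R) *m (@sigmaz R)]mulmxA sz2 mulmx1.
  have V0 : V 0%R = 1%:M := (hsol (hneg f)).1.
  have W0 : W 0%R = 1%:M by rewrite /W (hsol f).1 mulmx1 sz2.
  have e1 := adj_const Hh V0 W0 hV hW s.
  have e2 := mulmx1C (adj_const Hh W0 W0 hW hW s).
  have E : V s = W s *m (adj (W s) *m V s) by rewrite mulmxA e2 mul1mx.
  by rewrite e1 mulmx1 in E.
split=> hX; split; rewrite mxE; apply: sym_cint => // f; rewrite Usym conj_form.
- by rewrite (sz_diag hX) szE01.
- by rewrite (sz_diag hX) szE10.
- by rewrite (sz_off hX) mulmxN mulNmx mulmxN mulNmx mxE szE00.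
- by rewrite (sz_off hX) mulmxN mulNmx mulmxN mulNmx mxE szE11.
Qed.
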